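(* Assume the standing assumptions below. Let $X_k\in\mathbb{R}^{n\times n}$ be symmetric with $X_k\succeq0$, and let $X_{k+1}$ be a symmetric matrix satisfying the Lyapunov equation $$\widehat A_k^{\mathsf T}X_{k+1}+X_{k+1}\widehat A_k+\widehat\Pi_k(X_k)+M_k=0,$$ where $R_k=R+\Pi_{22}(X_k)$, $S_k=X_kB+L+\Pi_{12}(X_k)$, $\widehat A_k=A-BR_k^{-1}S_k^{\mathsf T}$ $(=A_{\mathrm c}(X_k)-G_{\mathrm c}(X_k)X_k)$, $P_k=\begin{bmatrix}I_n\\-R_k^{-1}S_k^{\mathsf T}\end{bmatrix}$, $\widehat\Pi_k(X)=P_k^{\mathsf T}\Pi(X)P_k$, and $M_k=P_k^{\mathsf T}\begin{bmatrix}Q&L\\L^{\mathsf T}&R\end{bmatrix}P_k$. Then $A_{\mathrm c}(X_k)-G_{\mathrm c}(X_k)X_k$ is stable if and only if $X_{k+1}\succeq0$.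
   Context: Data: $A,Q\in\mathbb{R}^{n\times n}$, $B,L\in\mathbb{R}^{n\times m}$, $R\in\mathbb{R}^{m\times m}$, $A_0^i\in\mathbb{R}^{n\times n}$, $B_0^i\in\mathbb{R}^{n\times m}$ ($i=1,\dots,r$); $A_0^0=A$, $B_0^0=B$. For symmetric $X$: $\Pi(X)=\begin{bmatrix}\Pi_{11}(X)&\Pi_{12}(X)\\\Pi_{12}(X)^{\mathsf T}&\Pi_{22}(X)\end{bmatrix}$ with $\Pi_{11}(X)=\sum_{i=1}^r (A_0^i)^{\mathsf T}XA_0^i$, $\Pi_{12}(X)=\sum_i (A_0^i)^{\mathsf T}XB_0^i$, $\Pi_{22}(X)=\sum_i (B_0^i)^{\mathsf T}XB_0^i$; $L_{\mathrm c}=L+\Pi_{12}$, $R_{\mathrm c}=R+\Pi_{22}$; $A_{\mathrm c}(X)=A-BR_{\mathrm c}(X)^{-1}L_{\mathrm c}(X)^{\mathsf T}$, $G_{\mathrm c}(X)=BR_{\mathrm c}(X)^{-1}B^{\mathsf T}$. A matrix is stable if all eigenvalues lie in the open left half-plane. Standing assumptions: (1) $R\succ0$, $\begin{bmatrix}Q&L\\L^{\mathsf T}&R\end{bmatrix}\succeq0$; (2) there is $F\in\mathbb{R}^{m\times n}$ with $\dot S=(A+BF)S+S(A+BF)^{\mathsf T}+\sum_{i=1}^r(A_0^i+B_0^iF)S(A_0^i+B_0^iF)^{\mathsf T}$ exponentially stable; (3) with $C^{\mathsf T}C=Q-LR^{-1}L^{\mathsf T}$, $C\in\mathbb{R}^{p\times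 n}$, and $\widetilde A_0^i=A_0^i-B_0^iR^{-1}L^{\mathsf T}$, there is $K\in\mathbb{R}^{n\times p}$ with $\dot S=(\widetilde A_0^0+KC)S+S(\widetilde A_0^0+KC)^{\mathsf T}+\sum_{i=1}^r\widetilde A_0^iS(\widetilde A_0^i)^{\mathsf T}$ exponentially stable; (4) $\mathcal N(Q-LR^{-1}L^{\mathsf T})\subseteq\mathcal N(L^{\mathsf T})\cap\bigcap_i\mathcal N(A_0^i)$; (5) $(A,B)$ stabilizable and $(Q-LR^{-1}L^{\mathsf T},A)$ detectable. *)

(* Defs.v *)
From HB Require Import structures.
From mathcomp Require Import all_boot all_order all_algebra.
From mathcomp Require Import complex.
From mathcomp Require Import all_classical all_reals all_analysis.
Set Implicit Arguments. Unset Strict Implicit. Unset Printing Implicit Defensive.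
Import Order.TTheory GRing.Theory Num.Theory.
Local Open Scope ring_scope.

Section Defs.
Variable R : realType.

Definition psd (n : nat) (X : 'M[R]_n) : Prop :=
  X^T = X /\ forall v : 'cV[R]_n, 0 <= (v^T *m X *m v) 0 0.

Definition pd (n : nat) (X : 'M[R]_n) : Prop :=
  X^T = X /\ forall v : 'cV[R]_n, v != 0 -> 0 < (v^T *m X *m v) 0 0.

Definition stable (n : nat) (A : 'M[R]_n) : Prop :=
  forall z : R[i], eigenvalue (map_mx (fun x : R => (x%:C)%C) A) z -> complex.Re z < 0.

Definition mx_abs_sum (n : nat) (S : 'M[R]_n) : R := \sum_i \sum_j `|S i j|.

Definition exp_stable_ode (n : nat) (Lop : 'M[R]_n -> 'M[R]_n) : Prop :=
  exists c a : R, 0 < a /\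
    forall S : R -> 'M[R]_n,
      (forall (t : R) i j, is_derive t (1 : R) (fun s : R => S s i j) (Lop (S t) i j)) ->
      forall t, 0 <= t -> mx_abs_sum (S t) <= c * expR (- (a * t)) * mx_abs_sum (S 0).

Variables (n m r : nat).
Variables (A Q : 'M[R]_n) (B L : 'M[R]_(n, m)) (Rm : 'M[R]_m)
          (A0 : 'I_r -> 'M[R]_n) (B0 : 'I_r -> 'M[R]_(n, m)).

Definition Pi11 (X : 'M[R]_n) : 'M[R]_n := \sum_i ((A0 i)^T *m X *m A0 i).
Definition Pi12 (X : 'M[R]_n) : 'M[R]_(n, m) := \sum_i ((A0 i)^T *m X *m B0 i).
Definition Pi22 (X : 'M[R]_n) : 'M[R]_m := \sum_i ((B0 i)^T *m X *m B0 i).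
Definition Pi (X : 'M[R]_n) : 'M[R]_(n + m) :=
  block_mx (Pi11 X) (Pi12 X) (Pi12 X)^T (Pi22 X).

Definition Lc (X : 'M[R]_n) := L + Pi12 X.
Definition Rc (X : 'M[R]_n) := Rm + Pi22 X.
Definition Ac (X : 'M[R]_n) : 'M[R]_n := A - B *m invmx (Rc X) *m (Lc X)^T.
Definition Gc (X : 'M[R]_n) : 'M[R]_n := B *m invmx (Rc X) *m B^T.

Definition assum1 : Prop := pd Rm /\ psd (block_mx Q L L^T Rm).

Definition assum2 : Prop :=
  exists F : 'M[R]_(m, n),
    exp_stable_ode (fun S => (A + B *m F) *m S + S *m (A + B *m F)^T +
      \sum_i ((A0 i + B0 i *m F) *m S *m (A0 i + B0 i *m F)^T)).

Definition Qt : 'M[R]_n := Q - L *m invmx Rm *m L^T.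
Definition A0t (i : 'I_r) : 'M[R]_n := A0 i - B0 i *m invmx Rm *m L^T.
Definition At00 : 'M[R]_n := A - B *m invmx Rm *m L^T.

Definition assum3 : Prop :=
  exists (p : nat) (C : 'M[R]_(p, n)), C^T *m C = Qt /\
    exists K : 'M[R]_(n, p),
      exp_stable_ode (fun S => (At00 + K *m C) *m S + S *m (At00 + K *m C)^T +
        \sum_i (A0t i *m S *m (A0t i)^T)).

Definition assum4 : Prop :=
  forall v : 'cV[R]_n, Qt *m v = 0 -> L^T *m v = 0 /\ forall i, A0 i *m v = 0.

Definition assum5 : Prop :=
  (exists F : 'M[R]_(m, n), stable (A + B *m F)) /\
  (exists K : 'M[R]_n, stable (A + K *m Qt)).

Definition standing_assumptions : Prop :=
  [/\ assum1, assum2, assum3, assum4 & assum5].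

Definition Rk (X : 'M[R]_n) : 'M[R]_m := Rm + Pi22 X.
Definition Sk (X : 'M[R]_n) : 'M[R]_(n, m) := X *m B + L + Pi12 X.
Definition Ahat (X : 'M[R]_n) : 'M[R]_n := A - B *m invmx (Rk X) *m (Sk X)^T.
Definition Pk (X : 'M[R]_n) : 'M[R]_(n + m, n) :=
  col_mx 1%:M (- (invmx (Rk X) *m (Sk X)^T)).
Definition Pihat (Xk X : 'M[R]_n) : 'M[R]_n := (Pk Xk)^T *m Pi X *m Pk Xk.
Definition Mk (X : 'M[R]_n) : 'M[R]_n :=
  (Pk X)^T *m block_mx Q L L^T Rm *m Pk X.

End Defs.

(* Main.v *)
Require Import Defs.
From HB Require Import structures.
From mathcomp Require Import all_boot all_order all_algebra.
From mathcomp Require Import complex.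
From mathcomp Require Import all_classical all_reals all_analysis.
From mathcomp Require Import ring.
Import Order.TTheory GRing.Theory Num.Theory.
Local Open Scope ring_scope.

Module Helpers.
Local Open Scope ring_scope.
Local Open Scope sesquilinear_scope.
Set Implicit Arguments. Unset Strict Implicit. Unset Printing Implicit Defensive.

Section Gen.
Variable C : numClosedFieldType.

Lemma ctM m n p (A : 'M[C]_(m, n)) (B : 'M[C]_(n, p)) : (A *m B)^t* = B^t* *m A^t*.
Proof. by rewrite trmx_mul map_mxM. Qed.
Lemma ctD m n (A B : 'M[C]_(m, n)) : (A + B)^t* = A^t* + B^t*.
Proof. by rewrite linearD map_mxD. Qed.
Lemma ctN m n (A : 'M[C]_(m, n)) : (- A)^t* = - A^t*.
Proof. by rewrite linearN map_mxN. Qed.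
Lemma ctB m n (A B : 'M[C]_(m, n)) : (A - B)^t* = A^t* - B^t*.
Proof. by rewrite ctD ctN. Qed.
Lemma ctZ m n a (A : 'M[C]_(m, n)) : (a *: A)^t* = a^* *: A^t*.
Proof. by rewrite linearZ map_mxZ. Qed.
Lemma ct0 m n : (0 : 'M[C]_(m, n))^t* = 0.
Proof. by rewrite trmx0 map_mx0. Qed.
Lemma ct_scalar n (a : C) : (a%:M : 'M[C]_n) ^t* = (a^*)%:M.
Proof. by rewrite tr_scalar_mx map_scalar_mx. Qed.
Lemma ct_block m1 m2 n1 n2 (a : 'M[C]_(m1,n1)) (b : 'M[C]_(m1,n2)) (c : 'M[C]_(m2,n1)) (d : 'M[C]_(m2,n2)) :
  (block_mx a b c d)^t* = block_mx (a^t*) (c^t*) (b^t*) (d^t*).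
Proof. by rewrite tr_block_mx map_block_mx. Qed.
Lemma ct_row m n1 n2 (a : 'M[C]_(m,n1)) (b : 'M[C]_(m,n2)) : (row_mx a b)^t* = col_mx (a^t*) (b^t*).
Proof. by rewrite tr_row_mx map_col_mx. Qed.
Lemma ct_e m n (A : 'M[C]_(m, n)) i j : A^t* i j = (A j i)^*.
Proof. by rewrite !mxE. Qed.

Definition fm p q (K : 'M[C]_(p, q)) (x : 'rV_p) (z : 'rV_q) : C := (x *m K *m z^t*) 0 0.
Definition hpsd n (K : 'M[C]_n) := forall v, 0 <= fm K v v.

Lemma fmDl p q (K : 'M[C]_(p, q)) x y z : fm K (x + y) z = fm K x z + fm K y z.
Proof. by rewrite /fm !mulmxDl mxE. Qed.
Lemma fmDr p q (K : 'M[C]_(p, q)) x y z : fm K x (y + z) = fm K x y + fm K x z.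
Proof. by rewrite /fm ctD mulmxDr mxE. Qed.
Lemma fmZl p q (K : 'M[C]_(p, q)) a x z : fm K (a *: x) z = a * fm K x z.
Proof. by rewrite /fm -!scalemxAl mxE. Qed.
Lemma fmZr p q (K : 'M[C]_(p, q)) a x z : fm K x (a *: z) = a^* * fm K x z.
Proof. by rewrite /fm ctZ -scalemxAr mxE. Qed.
Lemma fm_conj p q (K : 'M[C]_(p, q)) x z : fm K z x = (fm (K^t*) x z)^*.
Proof.
by rewrite /fm -ct_e !ctM !trmxCK mulmxA.
Qed.
Lemma fm_herm n (K : 'M[C]_n) x z : K^t* = K -> fm K z x = (fm K x z)^*.
Proof. by move=> hK; rewrite fm_conj hK. Qed.
Lemma fm_block m1 m2 n1 n2 (a : 'M[C]_(m1,n1)) (b : 'M[C]_(m1,n2)) (c : 'M[C]_(m2,n1)) (d : 'M[C]_(m2,n2)) x1 x2 z1 z2 :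
  fm (block_mx a b c d) (row_mx x1 x2) (row_mx z1 z2) = fm a x1 z1 + fm b x1 z2 + fm c x2 z1 + fm d x2 z2.
Proof.
rewrite /fm mul_row_block ct_row mul_row_col !mulmxDl !mxE.
by rewrite -!addrA; congr (_ + _); rewrite !addrA [X in X + _]addrC.
Qed.

Lemma hpsd_ker n (K : 'M[C]_n) v : hpsd K -> K^t* = K -> fm K v v = 0 -> v *m K = 0.
Proof.
move=> hK hH h0.
have hs : forall q, fm K v q = 0.
  move=> q; set s := fm K v q; set k := fm K q q.
  have k0 : 0 <= k := hK q.
  have kr : k^* = k by apply: conj_Creal; apply: ger0_real.
  have k1p : 0 < k + 1 by apply: (lt_le_trans ltr01); rewrite lerDr.
  have k1 : k + 1 != 0 by rewrite gt_eqF.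
  pose t := - s / (k + 1).
  have := hK (v + t *: q).
  rewrite fmDl !fmDr !fmZl !fmZr h0 (fm_herm v q hH) -/s -/k.
  have -> : t^* = - s^* / (k + 1).
    by rewrite /t rmorphM rmorphN fmorphV rmorphD rmorph1; congr (- _ / (_ + 1)); exact: kr.
  have -> : 0 + - s^* / (k + 1) * s + (t * s^* + t * (- s^* / (k + 1) * k))
      = - (s * s^*) * ((k + 2%:R) / (k + 1) ^+ 2).
    rewrite /t; field; exact: k1.
  have c0 : 0 < (k + 2%:R) / (k + 1) ^+ 2.
    apply: divr_gt0; last by apply: exprn_gt0.
    by apply: (lt_le_trans (ltr0n _ 2)); rewrite lerDr.
  rewrite mulNr oppr_ge0 pmulr_lle0 // => hss.
  have : s * s^* == 0 by rewrite eq_le hss mul_conjC_ge0.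
  by rewrite mul_conjC_eq0 => /eqP.
apply/eqP; apply: contraT => hne.
have := dotmx_is_dotmx hne; rewrite dotmxE.
by have := hs (v *m K); rewrite /fm => ->; rewrite ltxx.
Qed.
End Gen.

Local Open Scope ring_scope.
Local Open Scope sesquilinear_scope.
Set Implicit Arguments. Unset Strict Implicit. Unset Printing Implicit Defensive.

Section Gen2.
Variable C : numClosedFieldType.

Definition ip n (x z : 'rV[C]_n) : C := (x *m z^t*) 0 0.
Lemma ipC n (x z : 'rV[C]_n) : ip z x = (ip x z)^*.
Proof. by rewrite /ip -ct_e ctM trmxCK. Qed.
Lemma fm_ip p q (K : 'M[C]_(p,q)) x z : fm K x z = ip (x *m K) z.
Proof. by []. Qed.
Lemma fm0l p q (K : 'M[C]_(p,q)) z : fm K 0 z = 0.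
Proof. by rewrite /fm !mul0mx mxE. Qed.
Lemma fm0r p q (K : 'M[C]_(p,q)) z : fm K z 0 = 0.
Proof. by rewrite /fm ct0 mulmx0 mxE. Qed.
Lemma fm0 p q (z : 'rV[C]_p) (x : 'rV[C]_q) : fm 0 z x = 0.
Proof. by rewrite /fm mulmx0 mul0mx mxE. Qed.
Lemma mx11E (A B : 'M[C]_1) : (A *m B) 0 0 = A 0 0 * B 0 0.
Proof. by rewrite mxE big_ord1. Qed.
Lemma fm_r1 n (x u : 'rV[C]_n) : fm (x^t* *m x) u u = ip u x * (ip u x)^*.
Proof. by rewrite /fm mulmxA -mulmxA mx11E -ipC. Qed.
Lemma fm11 (a : C) (x z : 'rV[C]_1) : fm a%:M x z = x 0 0 * a * (z 0 0)^*.
Proof. by rewrite /fm !mx11E mxE eqxx mulr1n ct_e. Qed.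
Lemma fm_row1 n (c : 'rV[C]_n) (x : 'rV[C]_1) z : fm c x z = x 0 0 * (ip z c)^*.
Proof. by rewrite /fm -ipC [in LHS](mx11_scalar x) mul_scalar_mx -scalemxAl mxE. Qed.
Lemma fm_col1 n (c : 'rV[C]_n) (x : 'rV[C]_1) z : fm (c^t*) z x = ip z c * (x 0 0)^*.
Proof. by rewrite /fm mx11E ct_e. Qed.
Lemma fm_sub p q (K : 'M[C]_(p, q)) (L : 'M[C]_(p,q)) x z : fm (K - L) x z = fm K x z - fm L x z.
Proof. by rewrite /fm mulmxBr mulmxBl !mxE. Qed.
Lemma fm_add p q (K : 'M[C]_(p, q)) (L : 'M[C]_(p,q)) x z : fm (K + L) x z = fm K x z + fm L x z.
Proof. by rewrite /fm mulmxDr mulmxDl mxE. Qed.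
Lemma fm_scale p q (K : 'M[C]_(p, q)) a x z : fm (a *: K) x z = a * fm K x z.
Proof. by rewrite /fm -scalemxAr -scalemxAl mxE. Qed.

End Gen2.

Local Open Scope ring_scope.
Local Open Scope sesquilinear_scope.
Set Implicit Arguments. Unset Strict Implicit. Unset Printing Implicit Defensive.

Lemma solve3 (V : zmodType) (x y z v : V) : x + (y + z) = v -> z = v - x - y.
Proof. by move=> <-; rewrite [x + _]addrC addrK addrC addKr. Qed.

Lemma solve4 (V : zmodType) (x y z u v : V) : x + z + (y + u) = v -> z = v - x - y - u.
Proof. move=> <-. by rewrite [x + z]addrC !addrA (addrAC z x) (addrAC (z + y) x) (addrAC (z + y + u) x) subrK (addrAC z y u) addrK; rewrite addrK. Qed.

Section Step.
Variable C : numClosedFieldType.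

Definition LyapP n := forall T Y V : 'M[C]_n, is_trig_mx T -> (forall i, T i i + (T i i)^* < 0) ->
  Y^t* = Y -> hpsd V -> T *m Y + Y *m T^t* = - V -> hpsd Y.

Lemma lyap_step n (IH : LyapP n)
  (lam : C) (a : 'M[C]_(n,1)) (T' : 'M[C]_n) (y : C) (b : 'rV[C]_n) (Y' : 'M[C]_n)
  (w : C) (c : 'rV[C]_n) (V' : 'M[C]_n) :
  is_trig_mx T' -> (forall i, T' i i + (T' i i)^* < 0) -> lam + lam^* < 0 ->
  y^* = y -> Y'^t* = Y' -> w^* = w -> V'^t* = V' ->
  hpsd (block_mx w%:M c (c^t*) V') ->
  block_mx lam%:M 0 a T' *m block_mx y%:M b (b^t*) Y'
   + block_mx y%:M b (b^t*) Y' *m (block_mx lam%:M 0 a T')^t* = - block_mx w%:M c (c^t*) V' ->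
  hpsd (block_mx y%:M b (b^t*) Y').
Proof.
move=> hT' hd' hl hy hY' hw hV' hV E.
rewrite ct_block ct_scalar ct0 !mulmx_block add_block_mx opp_block_mx in E.
case/eq_block_mx: E => E11 E12 _ E22.
rewrite !(mul0mx, mulmx0, addr0, add0r, mul_scalar_mx) in E11 E12 E22.
have e11 : lam * y + y * lam^* = - w.
  move/(congr1 (fun M : 'M[C]_1 => M 0 0)): E11; rewrite !mxE eqxx /= !mulr1n.
  by [].
have hV'p : hpsd V'.
  by move=> u; have := hV (row_mx 0 u); rewrite fm_block !fm0l !fm0r !add0r.
have w0 : 0 <= w.
  have := hV (row_mx 1 0); rewrite fm_block fm11 !fm0r !fm0l !addr0 mxE eqxx /= mulr1n.
  by rewrite rmorph1 mul1r mulr1.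
have hVh : (block_mx w%:M c (c^t*) V')^t* = block_mx w%:M c (c^t*) V'.
  by rewrite ct_block ct_scalar hw trmxCK hV'.
have lne : lam + lam^* != 0 by rewrite lt_eqF.
case: (eqVneq w 0) => [w0e|wne].
  have c0 : c = 0.
    have := hpsd_ker hV hVh (v := row_mx 1 0).
    rewrite fm_block fm11 !fm0r !fm0l !addr0 mxE eqxx /= mulr1n w0e mulr0 mul0r.
    move=> /(_ erefl); rewrite mul_row_block !mul0mx !addr0 mul1mx -row_mx0.
    by case/eq_row_mx => _ h; rewrite -h; exact: (esym (mul1mx c)).
  have y0 : y = 0.
    move: e11; rewrite w0e oppr0 [y * _]mulrC -mulrDl => /eqP.
    by rewrite mulf_eq0 (negbTE lne) /= => /eqP.
  rewrite c0 y0 scale0r add0r oppr0 in E12.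
  have Eb : (lam^*%:M + T') *m b^t* = 0.
    move/(congr1 (fun M => M^t*)): E12.
    by rewrite ctD ctZ ctM trmxCK ct0 mulmxDl mul_scalar_mx.
  have htr : is_trig_mx (lam^*%:M + T').
    apply/is_trig_mxP => i j lij; rewrite !mxE (is_trig_mxP hT') // addr0.
    have -> : (i == j) = false by apply/negbTE; rewrite -val_eqE /= neq_ltn lij.
    by rewrite mulr0n.
  have hM : (lam^*%:M + T') \in unitmx.
    rewrite unitmxE unitfE det_trig //; apply/prodf_neq0 => i _.
    rewrite !mxE eqxx mulr1n; apply/negP => /eqP h0.
    have := hd' i; have := hl.
    have -> : T' i i = - lam^* by apply/eqP; rewrite -addr_eq0 addrC h0.
    have -> : (- lam^*)^* = - lam by rewrite rmorphN; congr (- _); exact: conjCK.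
    move=> h1 h2.
    move: h2; rewrite -opprD oppr_lt0 addrC => h2.
    by move: (lt_trans h1 h2); rewrite ltxx.
  have bt0 : b^t* = 0.
    have := congr1 (mulmx (invmx (lam^*%:M + T'))) Eb.
    by rewrite mulmxA mulVmx // mul1mx mulmx0.
  have b0 : b = 0 by rewrite -[b]trmxCK bt0 ct0.
  rewrite b0 ct0 !mul0mx mulmx0 !add0r in E22.
  rewrite b0.
  have hY'p := IH _ _ _ hT' hd' hY' hV'p E22.
  move=> v; rewrite -(hsubmxK v) fm_block y0 ct0 fm11 !fm0 mulr0 mul0r !add0r; exact: hY'p.
have wp : 0 < w by rewrite lt_def wne w0.
set rho := - (lam + lam^*).
have rhop : 0 < rho by rewrite /rho oppr_gt0.
have rhor : rho^* = rho by apply: conj_Creal; apply: ger0_real; exact: ltW.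
have rne : rho != 0 by rewrite gt_eqF.
have wy : w = rho * y by rewrite /rho -[w]opprK -e11; ring.
have yne : y != 0 by apply/eqP => y0; move: wne; rewrite wy y0 mulr0 eqxx.
have lcE : lam^* = - rho - lam by rewrite /rho; ring.
clearbody rho.
have E12' : b *m T'^t* = - c - lam *: b - y *: a^t* by apply: solve3.
have E12t : T' *m b^t* = - c^t* - lam^* *: b^t* - y *: a.
  by move/(congr1 (fun M => M^t*)): E12'; rewrite ctM trmxCK !ctB ctN !ctZ trmxCK hy.
have E22' : T' *m Y' = - V' - a *m b - b^t* *m a^t* - Y' *m T'^t*.
  by apply: solve4.
pose S := Y' - y^-1 *: (b^t* *m b).
pose d := c - rho *: b.
pose V2 := V' - w^-1 *: (c^t* *m c) + w^-1 *: (d^t* *m d).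
have ES : T' *m S + S *m T'^t* = - V2.
  rewrite /S mulmxBr mulmxBl -scalemxAr -scalemxAl mulmxA E12t -[b^t* *m b *m _]mulmxA E12' E22'.
  have cj : forall u v : C, (u - rho * v)^* = u^* - rho * v^*.
    by move=> u v; rewrite rmorphB rmorphM; congr (_ - _ * _); exact: rhor.
  rewrite /V2 /d; apply/matrixP => i j; rewrite !mxE !big_ord1 !mxE cj lcE wy.
  by field; rewrite yne rne.
have hV2 : hpsd V2.
  move=> u; set sg := ip u c.
  have h1 := hV (row_mx (- sg / w)%:M u).
  rewrite fm_block fm11 fm_row1 fm_col1 mxE eqxx mulr1n -/sg in h1.
  have -> : fm V2 u u = (- sg / w * w * (- sg / w)^* + - sg / w * sg^* + sg * (- sg / w)^* + fm V' u u)
      + w^-1 * (ip u d * (ip u d)^*).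
    rewrite /V2 fm_add fm_sub !fm_scale !fm_r1 -/sg.
    have -> : (- sg / w)^* = - sg^* / w.
      by rewrite rmorphM rmorphN fmorphV; congr (- _ * _^-1); exact: hw.
    by field.
  apply: addr_ge0 => //; apply: mulr_ge0; first by rewrite invr_ge0.
  exact: mul_conjC_ge0.
have hS : S^t* = S.
  rewrite /S ctB ctZ ctM trmxCK hY' fmorphV; congr (_ - _^-1 *: _); exact: hy.
have hSp := IH _ _ _ hT' hd' hS hV2 ES.
move=> v; rewrite -(hsubmxK v); set x1 := lsubmx v; set x' := rsubmx v.
rewrite fm_block fm11 fm_row1 fm_col1.
have -> : fm Y' x' x' = fm S x' x' + y^-1 * (ip x' b * (ip x' b)^*).
  by rewrite /S fm_sub fm_scale fm_r1 subrK.
set xi := x1 0 0; set be := ip x' b.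
have -> : xi * y * xi^* + xi * be^* + be * xi^* + (fm S x' x' + y^-1 * (be * be^*))
    = y^-1 * ((y * xi + be) * (y * xi + be)^*) + fm S x' x'.
  have -> : (y * xi + be)^* = y * xi^* + be^*.
    by rewrite rmorphD rmorphM; congr (_ * _ + _); exact: hy.
  by field.
apply: addr_ge0 => //; apply: mulr_ge0; last exact: mul_conjC_ge0.
have yp : 0 < y by rewrite -(pmulr_rgt0 _ rhop) -wy.
by rewrite invr_ge0 ltW.
Qed.
End Step.

Section Main.
Variable C : numClosedFieldType.

Lemma herm_block n (Y : 'M[C]_(1 + n)) : Y^t* = Y ->
  [/\ Y = block_mx (ulsubmx Y 0 0)%:M (ursubmx Y) ((ursubmx Y)^t*) (drsubmx Y),
      (ulsubmx Y 0 0)^* = ulsubmx Y 0 0 & (drsubmx Y)^t* = drsubmx Y].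
Proof.
move=> hY; have := hY; rewrite -{1 2}(submxK Y) ct_block => /eq_block_mx [h1 h2 h3 h4].
split => //; last by rewrite -ct_e h1.
by rewrite h3 -mx11_scalar submxK.
Qed.

Lemma trig_block n (T : 'M[C]_(1 + n)) : is_trig_mx T ->
  T = block_mx (ulsubmx T 0 0)%:M 0 (dlsubmx T) (drsubmx T).
Proof. by move=> hT; rewrite -(ursubmx_trig _ hT) // -mx11_scalar submxK. Qed.

Lemma lyap_trig n : LyapP C n.
Proof.
elim: n => [|n IH] T Y V hT hd hY hV hE.
  by move=> v; rewrite (thinmx0 v) fm0l.
have hVh : V^t* = V.
  have := congr1 (fun M => M^t*) hE; rewrite ctD !ctM trmxCK hY ctN.
  by rewrite addrC hE => /oppr_inj.
have [eY hy hY'] := @herm_block n Y hY.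
have [eV hw hV'] := @herm_block n V hVh.
have eT := @trig_block n T hT.
rewrite eY; pose T1 : 'M[C]_(1 + n) := T; pose V1 : 'M[C]_(1 + n) := V.
refine (@lyap_step C n IH (ulsubmx T1 0 0) (dlsubmx T1) (drsubmx T1) _ _ _ (ulsubmx V1 0 0) (ursubmx V1) (drsubmx V1) _ _ _ _ _ _ _ _ _).
- exact: (@drsubmx_trig _ 1 n 1 n T (leqnn 1) hT).
- by move=> i; rewrite !mxE; exact: (hd (rshift 1 i)).
- by rewrite !mxE; exact: hd.
- exact: hy.
- exact: hY'.
- exact: hw.
- exact: hV'.
- by rewrite -eV.
- by rewrite -eT -eY -eV.
Qed.
End Main.

Local Open Scope ring_scope.
Local Open Scope sesquilinear_scope.
Set Implicit Arguments. Unset Strict Implicit. Unset Printing Implicit Defensive.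

Lemma char_poly_tr (F : comNzRingType) n (A : 'M[F]_n) : char_poly A^T = char_poly A.
Proof.
rewrite /char_poly -det_tr; congr (\det _); apply/matrixP => i j; rewrite !mxE eq_sym //.
Qed.

Lemma eig_tr (F : fieldType) n (A : 'M[F]_n) a : eigenvalue A^T a = eigenvalue A a.
Proof. by rewrite !eigenvalue_root_char char_poly_tr. Qed.

Section Real.
Variable R : realType.
Local Notation C := (R[i]).
Local Notation rc := (real_complex R).
Definition Mc m n (A : 'M[R]_(m, n)) : 'M[C]_(m, n) := map_mx rc A.

Lemma rc_conj (x : R) : (rc x)^* = rc x.
Proof. by apply: conj_Creal; rewrite complex_real. Qed.

Lemma Mc_ct m n (A : 'M[R]_(m, n)) : (Mc A)^t* = Mc A^T.
Proof. by apply/matrixP => i j; rewrite !mxE rc_conj. Qed.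

Lemma realsplit n (v : 'rV[C]_n) :
  v = Mc (map_mx (@complex.Re R) v) + 'i *: Mc (map_mx (@complex.Im R) v).
Proof. by apply/matrixP => i j; rewrite !mxE -complexiE -complexE. Qed.

Lemma fm_real n (X : 'M[R]_n) x y : fm (Mc X) (Mc x) (Mc y) = rc ((x *m X *m y^T) 0 0).
Proof. by rewrite /fm Mc_ct /Mc -!map_mxM mxE. Qed.

Lemma psd_hpsd n (X : 'M[R]_n) : psd X -> hpsd (Mc X).
Proof.
move=> [hs hp] v; rewrite [v]realsplit.
set x := map_mx _ v; set y := map_mx _ v.
rewrite fmDl !fmDr !fmZl !fmZr !fm_real conjCi.
have sxy : (y *m X *m x^T) 0 0 = (x *m X *m y^T) 0 0.
  have t1 (M : 'M[R]_1) : M 0 0 = M^T 0 0 by rewrite mxE.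
  by rewrite t1 !trmx_mul trmxK hs mulmxA.
rewrite sxy.
have -> : rc ((x *m X *m x^T) 0 0) + - 'i * rc ((x *m X *m y^T) 0 0) +
   ('i * rc ((x *m X *m y^T) 0 0) + 'i * (- 'i * rc ((y *m X *m y^T) 0 0)))
   = rc ((x *m X *m x^T) 0 0) - 'i ^+ 2 * rc ((y *m X *m y^T) 0 0) by ring.
rewrite sqrCi mulN1r opprK -rmorphD /= ler0c.
by apply: addr_ge0; [have := hp x^T | have := hp y^T]; rewrite trmxK.
Qed.


Lemma stable_eig n (Ah : 'M[R]_n) (z : C) : stable Ah -> eigenvalue (Mc Ah) z -> z + z^* < 0.
Proof.
move=> hs hz; have := hs z hz.
have -> : z + z^* = rc (2 * complex.Re z).
  by rewrite rmorphM /= complexRe ReE rmorph_nat; field.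
by rewrite -(rmorph0 rc) ltcR pmulr_rlt0.
Qed.

Lemma eig_conj n (P G : 'M[C]_n) mu : P \is unitarymx -> eigenvalue (P *m G *m P^t*) mu -> eigenvalue G mu.
Proof.
move=> hP /eigenvalueP [v hv vne]; apply/eigenvalueP; exists (v *m P).
  by rewrite scalemxAl -hv !mulmxA mulmxKtV.
by rewrite mulmx_free_eq0 // row_free_unit unitarymx_unit.
Qed.

Lemma trig_eig n (T : 'M[C]_n) i : is_trig_mx T -> eigenvalue T (T i i).
Proof.
move=> hT; rewrite eigenvalue_root_char char_poly_trig // /root horner_prod.
by apply/prodf_eq0; exists i => //; rewrite hornerXsubC subrr.
Qed.

Lemma fwd n (Ah X W : 'M[R]_n) : stable Ah -> X^T = X -> psd W ->
  Ah^T *m X + X *m Ah = - W -> psd X.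
Proof.
move=> hs hX hW E; split => //.
case: n Ah X W hs hX hW E => [|n] Ah X W hs hX hW E v.
  by rewrite (flatmx0 v) mulmx0 mxE.
set G := Mc Ah^T.
have [P hPu hT] := Schur G (ltn0Sn n).
move: hT; rewrite /similar_to conjumx ?unitarymx_unit // invmx_unitary // => hT.
have hG : G^t* = Mc Ah by rewrite Mc_ct trmxK.
have key : G *m Mc X + Mc X *m Mc Ah = - Mc W.
  by rewrite /G /Mc -!map_mxM -map_mxD E map_mxN.
have hY := @lyap_trig _ n.+1 (P *m G *m P^t*) (P *m Mc X *m P^t*) (P *m Mc W *m P^t*) hT.
have {hY} hY : hpsd (P *m Mc X *m P^t*).
  apply: hY.
  - move=> i; apply: (stable_eig hs); rewrite -eig_tr /Mc map_trmx.
    exact: (eig_conj hPu (trig_eig i hT)).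
  - by rewrite !ctM trmxCK Mc_ct hX mulmxA.
  - by move=> u; have := psd_hpsd hW (u *m P); rewrite /fm ctM !mulmxA.
  - rewrite !ctM trmxCK hG !mulmxA !mulmxKtV //.
    rewrite -mulmxDl -[P *m G *m Mc X]mulmxA -[P *m Mc X *m Mc Ah]mulmxA -mulmxDr key.
    by rewrite mulmxN mulNmx.
have := hY (Mc v^T *m P^t*).
rewrite /fm !ctM trmxCK !mulmxA !mulmxKtV // Mc_ct trmxK /Mc -!map_mxM mxE.
by rewrite -(rmorph0 rc) lecR.
Qed.

End Real.

Local Open Scope ring_scope.
Local Open Scope sesquilinear_scope.
Set Implicit Arguments. Unset Strict Implicit. Unset Printing Implicit Defensive.

Section P.
Variable R : realType.

Lemma psd_congr p q (Z : 'M[R]_p) (P : 'M[R]_(p, q)) : psd Z -> psd (P^T *m Z *m P).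
Proof.
move=> [hs hp]; split; first by rewrite !trmx_mul trmxK hs mulmxA.
by move=> v; have := hp (P *m v); rewrite trmx_mul !mulmxA.
Qed.

Lemma psd_add p (Z1 Z2 : 'M[R]_p) : psd Z1 -> psd Z2 -> psd (Z1 + Z2).
Proof.
move=> [h1 p1] [h2 p2]; split; first by rewrite linearD /= h1 h2.
by move=> v; rewrite mulmxDr mulmxDl mxE; apply: addr_ge0.
Qed.

Lemma psd0 p : psd (0 : 'M[R]_p).
Proof. by split; [rewrite trmx0 | move=> v; rewrite mulmx0 mul0mx mxE]. Qed.

Lemma psd_sum p r (F : 'I_r -> 'M[R]_p) : (forall i, psd (F i)) -> psd (\sum_i F i).
Proof. by move=> h; apply: (big_ind (@psd R p)) => //; [exact: psd0 | exact: psd_add]. Qed.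

Lemma sum_block r m1 m2 n1 n2 (f : 'I_r -> 'M[R]_(m1, n1)) (g : 'I_r -> 'M[R]_(m1, n2))
  (h : 'I_r -> 'M[R]_(m2, n1)) (k : 'I_r -> 'M[R]_(m2, n2)) :
  \sum_i block_mx (f i) (g i) (h i) (k i) = block_mx (\sum_i f i) (\sum_i g i) (\sum_i h i) (\sum_i k i).
Proof.
elim: r f g h k => [|r IH] f g h k.
  by rewrite !big_ord0 block_mx0.
by rewrite !big_ord_recr /= IH add_block_mx.
Qed.

Lemma Pi_sum n m r (A0 : 'I_r -> 'M[R]_n) (B0 : 'I_r -> 'M[R]_(n, m)) X : X^T = X ->
  Pi A0 B0 X = \sum_i (row_mx (A0 i) (B0 i))^T *m X *m row_mx (A0 i) (B0 i).
Proof.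
move=> hX.
under eq_bigr do rewrite tr_row_mx mul_col_mx mul_col_row.
rewrite sum_block /Pi /Pi12; congr block_mx.
by rewrite (linear_sum (@trmx _ _ _)) /=; apply: eq_bigr => i _; rewrite !trmx_mul trmxK hX mulmxA.
Qed.

Lemma psd_Pi n m r (A0 : 'I_r -> 'M[R]_n) (B0 : 'I_r -> 'M[R]_(n, m)) X : psd X -> psd (Pi A0 B0 X).
Proof.
move=> hX; rewrite Pi_sum; last by case: hX.
by apply: psd_sum => i; apply: psd_congr.
Qed.
End P.

Section Q.
Variable R : realType.
Local Notation C := (R[i]).
Local Notation rc := (real_complex R).

Lemma split0 p q (a b : 'M[R]_(p, q)) : Mc a + 'i *: Mc b = 0 -> a = 0 /\ b = 0.
Proof.
move=> /matrixP e; split; apply/matrixP => i j; have := e i j; rewrite !mxE -complexiE /=.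
  by case=> h _; move: h; rewrite mul0r mul1r subrr addr0.
by case=> _ h; move: h; rewrite mul0r mul1r !add0r.
Qed.

Lemma Ac_Ahat n m r (A : 'M[R]_n) (B L : 'M[R]_(n, m)) Rm A0 B0 (X : 'M[R]_n) : X^T = X ->
  Ac A B L Rm A0 (r:=r) B0 X - Gc B Rm B0 X *m X = Ahat A B L Rm A0 B0 X.
Proof.
move=> hX; rewrite /Ac /Gc /Ahat /Sk /Lc /Rk /Rc !linearD /= trmx_mul hX.
by rewrite mulmxA -!addrA; congr (_ + _); rewrite [RHS]addrC -addrA.
Qed.

Lemma fmMl p q s (M1 : 'M[C]_(p, q)) (M2 : 'M[C]_(q, s)) x y : fm (M1 *m M2) x y = fm M2 (x *m M1) y.
Proof. by rewrite /fm mulmxA. Qed.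
Lemma fmMr p q s (M2 : 'M[C]_(p, q)) (M1 : 'M[C]_(q, s)) x y : fm (M2 *m M1) x y = fm M2 x (y *m M1^t*).
Proof. by rewrite /fm ctM trmxCK !mulmxA. Qed.
Lemma fmN p q (K : 'M[C]_(p, q)) x y : fm (- K) x y = - fm K x y.
Proof. by rewrite /fm mulmxN mulNmx mxE. Qed.

Lemma pd_unit m (M : 'M[R]_m) : pd M -> M \in unitmx.
Proof.
move=> [_ hp]; rewrite unitmxE unitfE; apply/negP => /det0P [x xne hx].
suff : x^T != 0 by move/(hp x^T); rewrite trmxK hx mul0mx mxE ltxx.
by apply: contra xne => /eqP h; rewrite -[x]trmxK h trmx0.
Qed.

Lemma re_ge0 (z : C) : 0 <= complex.Re z -> 0 <= z + z^*.
Proof.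
move=> h; have -> : z + z^* = rc (2 * complex.Re z).
  by rewrite rmorphM /= complexRe ReE rmorph_nat; field.
by rewrite -(rmorph0 rc) lecR mulr_ge0.
Qed.

Lemma bwd n m r (A Q : 'M[R]_n) (B L : 'M[R]_(n, m)) (Rm : 'M[R]_m)
  (A0 : 'I_r -> 'M[R]_n) (B0 : 'I_r -> 'M[R]_(n, m)) (Xk Xk1 : 'M[R]_n) :
  assum1 Q L Rm -> assum4 Q L Rm A0 -> assum5 A Q B L Rm -> psd Xk -> psd Xk1 ->
  (Ahat A B L Rm A0 B0 Xk)^T *m Xk1 + Xk1 *m Ahat A B L Rm A0 B0 Xk
    = - (Pihat B L Rm A0 B0 Xk Xk + Mk Q B L Rm A0 B0 Xk) ->
  stable (Ahat A B L Rm A0 B0 Xk).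
Proof.
move=> [hRpd hMb] h4 [_ [K hK]] hXk hX1 E z hz.
have [hRs _] := hRpd; have [hMs _] := hMb.
set Ah := Ahat A B L Rm A0 B0 Xk in E hz *.
set W := Pihat B L Rm A0 B0 Xk Xk + Mk Q B L Rm A0 B0 Xk in E.
rewrite ltNge; apply/negP => hge.
have : eigenvalue (Mc Ah)^T z by rewrite eig_tr; exact: hz.
case/eigenvalueP => v; rewrite /Mc map_trmx -/(Mc Ah^T) => hv vne.
have hvA : v *m (Mc Ah)^t* = z *: v by rewrite Mc_ct.
have e1 : fm (Mc (Ah^T *m Xk1 + Xk1 *m Ah)) v v = (z + z^*) * fm (Mc Xk1) v v.
  rewrite /Mc map_mxD !map_mxM fm_add fmMl fmMr -/(Mc _) hv hvA fmZl fmZr.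
  by rewrite mulrDl.
rewrite E /Mc map_mxN fmN -/(Mc W) in e1.
have g0 : 0 <= fm (Mc W) v v.
  apply: psd_hpsd; apply: psd_add; first by apply: psd_congr; apply: psd_Pi.
  exact: psd_congr.
have f0 : 0 <= fm (Mc Xk1) v v by apply: psd_hpsd.
have gz : fm (Mc W) v v = 0.
  apply/eqP; rewrite eq_le g0 andbT -oppr_ge0 e1.
  by apply: mulr_ge0 => //; exact: re_ge0.
have mz : fm (Mc (Mk Q B L Rm A0 B0 Xk)) v v = 0.
  move: gz; rewrite /W /Mc map_mxD fm_add -!/(Mc _).
  have p1 : 0 <= fm (Mc (Pihat B L Rm A0 B0 Xk Xk)) v v.
    by apply: psd_hpsd; apply: psd_congr; apply: psd_Pi.
  have p2 : 0 <= fm (Mc (Mk Q B L Rm A0 B0 Xk)) v v.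
    by apply: psd_hpsd; apply: psd_congr.
  by move/eqP; rewrite paddr_eq0 // => /andP [_ /eqP].
rewrite /Mk /Mc !map_mxM fmMr fmMl -!/(Mc _) Mc_ct in mz.
have hMh : (Mc (block_mx Q L L^T Rm))^t* = Mc (block_mx Q L L^T Rm) by rewrite Mc_ct hMs.
have hpk := hpsd_ker (psd_hpsd hMb) hMh mz.
set U := - (invmx (Rk Rm B0 Xk) *m (Sk B L A0 B0 Xk)^T) in hpk.
rewrite /Pk tr_col_mx trmx1 /Mc map_row_mx map_mx1 mul_mx_row mulmx1 -!/(Mc _) in hpk.
set u := v *m Mc U^T in hpk.
rewrite /Mc map_block_mx -!/(Mc _) mul_row_block -row_mx0 in hpk.
case/eq_row_mx: hpk => eq1 eq2.
have hRcu : Mc Rm \in unitmx by rewrite /Mc map_unitmx; exact: pd_unit.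
have eq2' : u *m Mc Rm = - (v *m Mc L) by apply/eqP; rewrite -addr_eq0 addrC eq2.
have hu : u = - (v *m Mc L) *m invmx (Mc Rm) by rewrite -eq2' mulmxK.
have eq1' : v *m Mc Q = - (u *m Mc L^T) by apply/eqP; rewrite -addr_eq0 eq1.
have hQt : v *m Mc (Qt Q L Rm) = 0.
  rewrite /Qt /Mc map_mxB !map_mxM map_invmx -!/(Mc _) mulmxBr eq1' hu.
  by rewrite !mulNmx opprK !mulmxA subrr.
have hQ : Q^T = Q by move: hMs; rewrite tr_block_mx => /eq_block_mx [].
have hQs : (Qt Q L Rm)^T = Qt Q L Rm.
  by rewrite /Qt linearB /= !trmx_mul trmxK trmx_inv hRs hQ mulmxA.
have hprod p' (M : 'M[R]_(n, p')) x y : (Mc x + 'i *: Mc y) *m Mc M = Mc (x *m M) + 'i *: Mc (y *m M).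
  by rewrite mulmxDl -scalemxAl /Mc !map_mxM.
have hsplit := realsplit v.
set x := map_mx _ v in hsplit; set y := map_mx _ v in hsplit.
have [xQ yQ] : x *m Qt Q L Rm = 0 /\ y *m Qt Q L Rm = 0.
  by apply: split0; rewrite -hprod -hsplit.
have hL (x' : 'rV[R]_n) : x' *m Qt Q L Rm = 0 -> x' *m L = 0.
  move=> hx'; have hx : Qt Q L Rm *m x'^T = 0 by rewrite -hQs -trmx_mul hx' trmx0.
  case: (h4 _ hx) => hLx _.
  by rewrite -[x' *m L]trmxK trmx_mul hLx trmx0.
have vL : v *m Mc L = 0.
  by rewrite hsplit hprod (hL _ xQ) (hL _ yQ) /Mc !map_mx0 scaler0 addr0.
have u0 : u = 0 by rewrite hu vL oppr0 mul0mx.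
have hAh : Ah^T = A^T + U^T *m B^T.
  have -> : Ah = A + B *m U by rewrite /Ah /Ahat /U mulmxN mulmxA.
  by rewrite linearD /= trmx_mul.
rewrite hAh /Mc map_mxD map_mxM mulmxDr mulmxA -!/(Mc _) -/u u0 mul0mx addr0 in hv.
have : eigenvalue (Mc (A + K *m Qt Q L Rm)) z.
  rewrite -eig_tr; apply/eigenvalueP; exists v => //.
  rewrite /Mc map_trmx linearD /= trmx_mul map_mxD map_mxM mulmxDr -!/(Mc _) hv mulmxA hQs hQt.
  by rewrite mul0mx addr0.
by move/(hK z); rewrite ltNge hge.
Qed.
End Q.

End Helpers.
Import Helpers.

Theorem lemmaC2 (R : realType) (n m r : nat)
  (A Q : 'M[R]_n) (B L : 'M[R]_(n, m)) (Rm : 'M[R]_m)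
  (A0 : 'I_r -> 'M[R]_n) (B0 : 'I_r -> 'M[R]_(n, m))
  (Xk Xk1 : 'M[R]_n) :
  standing_assumptions A Q B L Rm A0 B0 ->
  psd Xk ->
  Xk1^T = Xk1 ->
  (Ahat A B L Rm A0 B0 Xk)^T *m Xk1 + Xk1 *m Ahat A B L Rm A0 B0 Xk
    + Pihat B L Rm A0 B0 Xk Xk + Mk Q B L Rm A0 B0 Xk = 0 ->
  (stable (Ac A B L Rm A0 B0 Xk - Gc B Rm B0 Xk *m Xk) <-> psd Xk1).
Proof.
move=> [a1 a2 a3 a4 a5] hXk hX1 E.
have hXs : Xk^T = Xk by case: hXk.
rewrite Ac_Ahat //.
have E' : (Ahat A B L Rm A0 B0 Xk)^T *m Xk1 + Xk1 *m Ahat A B L Rm A0 B0 Xk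
    = - (Pihat B L Rm A0 B0 Xk Xk + Mk Q B L Rm A0 B0 Xk).
  by apply/eqP; rewrite -addr_eq0 addrA E.
split => [hs | hp].
- apply: (fwd hs hX1 _ E'); apply: psd_add.
    by apply: psd_congr; apply: psd_Pi.
  by apply: psd_congr; case: a1.
- exact: (bwd a1 a4 a5 hXk hp E').
Qed.
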